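(* Let $R$ be a connected zero-sum-free semiring and $V$ a free $R$-module. The set of basis lines of $V$ does not depend on the choice of basis. Moreover, any $R$-module automorphism $f:V\to V$ induces a permutation $\sigma_f$ of the set of basis lines, sending the line spanned by a basis vector $v$ to $\mathrm{span}(f(v))$; and for two automorphisms $f,g$ one has $\sigma_{fg}=\sigma_f\sigma_g$.
   Context: All semirings are commutative. $R$ is zero-sum-free if $a+b=0$ implies $a=b=0$, and connected if $\mathrm{Spec}\,R$ is connected, equivalently $R$ has only trivial idempotents. Given a basis of $V$, a basis line is a submodule spanned by a single basis vector. *)

(* Defs.v *)
From HB Require Import structures.
From mathcomp Require Import all_boot all_order all_algebra.
Set Implicit Arguments. Unset Strict Implicit. Unset Printing Implicit Defensive.
Import GRing.Theory.
Local Open Scope ring_scope.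

Definition zero_sum_free (R : comNzSemiRingType) : Prop :=
  forall a b : R, a + b = 0 -> a = 0 /\ b = 0.

Definition connected_semiring (R : comNzSemiRingType) : Prop :=
  forall e : R, e * e = e -> e = 0 \/ e = 1.

Section Defs.
Variables (R : comNzSemiRingType) (V : lSemiModType R).

Definition spans (B : V -> Prop) : Prop :=
  forall v : V, exists (s : seq V) (c : V -> R),
    (forall u, u \in s -> B u) /\ v = \sum_(u <- s) c u *: u.

Definition lin_indep (B : V -> Prop) : Prop :=
  forall (s : seq V) (c d : V -> R), uniq s -> (forall u, u \in s -> B u) ->
    \sum_(u <- s) c u *: u = \sum_(u <- s) d u *: u ->
    forall u, u \in s -> c u = d u.

Definition is_basis (B : V -> Prop) : Prop := spans B /\ lin_indep B.

Definition free_module : Prop := exists B, is_basis B.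

Definition same_set (L1 L2 : V -> Prop) : Prop := forall x, L1 x <-> L2 x.

Definition line (v : V) : V -> Prop := fun w => exists r : R, w = r *: v.

Definition basis_line (B : V -> Prop) (L : V -> Prop) : Prop :=
  exists v, B v /\ same_set L (line v).

Definition is_automorphism (f : V -> V) : Prop :=
  [/\ forall x y, f (x + y) = f x + f y,
      forall (a : R) x, f (a *: x) = a *: f x & bijective f].

Definition sigma (f : V -> V) (L : V -> Prop) : V -> Prop :=
  fun w => exists u, L u /\ w = f u.

End Defs.

(* Main.v *)
Require Import Defs.
From mathcomp Require Import all_boot all_order all_algebra.
From Stdlib Require Import ClassicalEpsilon.
Set Implicit Arguments. Unset Strict Implicit. Unset Printing Implicit Defensive.
Import GRing.Theory.
Local Open Scope ring_scope.

Section Aux.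
Variables (R : comNzSemiRingType) (V : lSemiModType R).

Definition ev (s : seq V) (c : V -> R) (u : V) : R := if u \in s then c u else 0.

Definition rep (B : V -> Prop) (v : V) (s : seq V) (c : V -> R) : Prop :=
  [/\ uniq s, forall u, u \in s -> B u & v = \sum_(u <- s) c u *: u].

Lemma ext_sum (s s2 : seq V) (c : V -> R) : uniq s -> uniq s2 -> {subset s <= s2} ->
  \sum_(u <- s) c u *: u = \sum_(u <- s2) ev s c u *: u.
Proof.
move=> us us2 sub.
rewrite [RHS](eq_bigr (fun u => if u \in s then c u *: u else 0)); last first.
  by move=> u _; rewrite /ev; case: ifP => // _; rewrite scale0r.
rewrite -big_mkcond -big_filter; apply: perm_big.
apply: uniq_perm => //; first exact: filter_uniq.
by move=> u; rewrite mem_filter; case: (boolP (u \in s)) => // /sub ->.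
Qed.

Lemma rep_unique B v s c s' c' : lin_indep B -> rep B v s c -> rep B v s' c' ->
  forall u, ev s c u = ev s' c' u.
Proof.
move=> li [us Bs ->] [us' Bs' e] u.
set s2 := undup (s ++ s').
have us2 : uniq s2 by apply: undup_uniq.
have sub1 : {subset s <= s2} by move=> x xs; rewrite mem_undup mem_cat xs.
have sub2 : {subset s' <= s2} by move=> x xs; rewrite mem_undup mem_cat xs orbT.
rewrite (ext_sum c us us2 sub1) (ext_sum c' us' us2 sub2) in e.
have B2 : forall x, x \in s2 -> B x.
  by move=> x; rewrite mem_undup mem_cat => /orP [/Bs|/Bs'].
case: (boolP (u \in s2)) => us2u; first exact: (li _ _ _ us2 B2 e).
rewrite /ev; case: ifP => [/sub1|_]; first by rewrite (negbTE us2u).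
by case: ifP => [/sub2|_] //; rewrite (negbTE us2u).
Qed.

Lemma rep_exists B : spans B -> forall v, exists s c, rep B v s c.
Proof.
move=> sp v; have [s [c [Bs ->]]] := sp v.
elim: s Bs => [|x s IH] Bs.
  by exists [::], c; split => //; rewrite !big_nil.
have [s' [c' [us' Bs' e]]] : exists s' c', rep B (\sum_(u <- s) c u *: u) s' c'.
  by apply: IH => u us; apply: Bs; rewrite in_cons us orbT.
rewrite big_cons e.
case: (boolP (x \in s')) => xs.
  exists s', (fun u => if u == x then c x + c' x else c' u); split => //.
  rewrite (bigD1_seq x) //= [in RHS](bigD1_seq x) //= eqxx scalerDl addrA.
  congr (_ + _); apply: eq_bigr => u /negbTE ->; done.
exists (x :: s'), (fun u => if u == x then c x else c' u); split.
- by rewrite /= xs.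
- by move=> u; rewrite in_cons => /orP [/eqP ->|/Bs']; [apply: Bs; rewrite in_cons eqxx|].
- rewrite big_cons eqxx; congr (_ + _); apply: eq_big_seq => u us.
  by case: eqP => // eux; rewrite -eux us in xs.
Qed.

Definition coord (B : V -> Prop) (v u : V) : R :=
  epsilon (inhabits 0) (fun r => exists s c, rep B v s c /\ r = ev s c u).

Lemma coord_rep B v s c u : is_basis B -> rep B v s c -> coord B v u = ev s c u.
Proof.
move=> [sp li] r.
have ex : exists r, exists s c, rep B v s c /\ r = ev s c u.
  by exists (ev s c u), s, c.
rewrite /coord; have [s' [c' [r' ->]]] := epsilon_spec (inhabits 0) _ ex.
exact: (rep_unique li r' r).
Qed.

Lemma coordD B x y u : is_basis B -> coord B (x + y) u = coord B x u + coord B y u.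
Proof.
move=> bB; have [sp li] := bB.
have [s1 [c1 r1]] := rep_exists sp x; have [s2 [c2 r2]] := rep_exists sp y.
case: r1 => [u1 B1 e1]; case: r2 => [u2 B2 e2].
set s := undup (s1 ++ s2).
have us : uniq s by apply: undup_uniq.
have sub1 : {subset s1 <= s} by move=> z zs; rewrite mem_undup mem_cat zs.
have sub2 : {subset s2 <= s} by move=> z zs; rewrite mem_undup mem_cat zs orbT.
have r : rep B (x + y) s (fun z => ev s1 c1 z + ev s2 c2 z).
  split => //.
    by move=> z; rewrite mem_undup mem_cat => /orP [/B1|/B2].
  rewrite (eq_bigr (fun z => ev s1 c1 z *: z + ev s2 c2 z *: z)); last first.
    by move=> z _; rewrite scalerDl.
  by rewrite big_split /= e1 e2 (ext_sum c1 u1 us sub1) (ext_sum c2 u2 us sub2).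
rewrite (coord_rep u bB r) (coord_rep u bB (And3 u1 B1 e1)) (coord_rep u bB (And3 u2 B2 e2)).
rewrite {1}/ev; case: ifP => // /negbT; rewrite mem_undup mem_cat negb_or => /andP [n1 n2].
by rewrite /ev (negbTE n1) (negbTE n2) addr0.
Qed.

Lemma coordZ B a x u : is_basis B -> coord B (a *: x) u = a * coord B x u.
Proof.
move=> bB; have [sp li] := bB.
have [s1 [c1 [u1 B1 e1]]] := rep_exists sp x.
have r : rep B (a *: x) s1 (fun z => a * c1 z).
  split => //; rewrite e1 scaler_sumr; apply: eq_bigr => z _; by rewrite scalerA.
rewrite (coord_rep u bB r) (coord_rep u bB (And3 u1 B1 e1)) /ev.
by case: ifP => //; rewrite mulr0.
Qed.

Lemma coord0 B u : is_basis B -> coord B 0 u = 0.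
Proof.
move=> bB.
have r : rep B 0 [::] (fun _ => 0) by split => //; rewrite big_nil.
by rewrite (coord_rep u bB r).
Qed.

Lemma coord_sum B (s : seq V) (a : V -> R) (w : V -> V) u : is_basis B ->
  coord B (\sum_(i <- s) a i *: w i) u = \sum_(i <- s) a i * coord B (w i) u.
Proof.
move=> bB; elim: s => [|x s IH]; first by rewrite !big_nil coord0.
by rewrite !big_cons coordD // coordZ // IH.
Qed.

Lemma coord_basis B b u : is_basis B -> B b -> coord B b u = if u == b then 1 else 0.
Proof.
move=> bB Bb.
have r : rep B b [:: b] (fun _ => 1).
  split => //; first by move=> z; rewrite mem_seq1 => /eqP ->.
  by rewrite big_seq1 scale1r.
by rewrite (coord_rep u bB r) /ev mem_seq1.
Qed.

Lemma coord_expand B v : is_basis B -> exists s, [/\ uniq s, forall u, u \in s -> B u,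
  v = \sum_(u <- s) coord B v u *: u & forall u, u \notin s -> coord B v u = 0].
Proof.
move=> bB; have [sp li] := bB.
have [s [c r]] := rep_exists sp v.
have cr := fun u => coord_rep u bB r.
case: r => [us Bs e]; exists s; split => //.
  rewrite {1}e; apply: eq_big_seq => u su; by rewrite cr /ev su.
by move=> u nu; rewrite cr /ev (negbTE nu).
Qed.

Lemma sum0_each (s : seq V) (F : V -> R) : zero_sum_free R ->
  \sum_(i <- s) F i = 0 -> forall i, i \in s -> F i = 0.
Proof.
move=> zs; elim: s => [|x s IH] //; rewrite big_cons => /zs [h1 h2] i.
by rewrite in_cons => /orP [/eqP ->|/IH]; [|apply].
Qed.

End Aux.
Section Key.
Variables (R : comNzSemiRingType) (V : lSemiModType R).

Lemma key (B1 B2 : V -> Prop) b : zero_sum_free R -> connected_semiring R ->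
  is_basis B1 -> is_basis B2 -> B1 b ->
  exists e r r', [/\ B2 e, r * r' = 1 & b = r *: e].
Proof.
move=> zs cn b1 b2 Bb.
pose p e := coord B2 b e.
pose q e x := coord B1 e x.
have [s [us Bs eb _]] := coord_expand b b2.
have h1 : forall x, coord B1 b x = \sum_(e <- s) p e * q e x.
  by move=> x; rewrite {1}eb coord_sum.
have sum1 : \sum_(e <- s) p e * q e b = 1 by rewrite -h1 coord_basis // eqxx.
have off1 : forall x e, x != b -> e \in s -> p e * q e x = 0.
  move=> x e nx es; apply: (sum0_each (F := fun e => p e * q e x) zs _ es).
  by rewrite -h1 coord_basis // (negbTE nx).
have off2 : forall e e', B2 e -> B2 e' -> e' != e -> q e b * p e' = 0.
  move=> e e' Be Be' ne.
  have [t [ut Bt et nt]] := coord_expand e b1.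
  have h2 : \sum_(x <- t) q e x * coord B2 x e' = 0.
    by rewrite -coord_sum // -et coord_basis // (negbTE ne).
  case: (boolP (b \in t)) => bt; first exact: (sum0_each zs h2 bt).
  by rewrite /q (nt _ bt) mul0r.
pose eps e := p e * q e b.
have orth : forall e e', e \in s -> e' \in s -> e' != e -> eps e * eps e' = 0.
  move=> e e' es es' ne; rewrite /eps.
  rewrite mulrA -(mulrA (p e)) off2; [by rewrite mulr0 mul0r|exact: Bs|exact: Bs|done].
have idem : forall e, e \in s -> eps e * eps e = eps e.
  move=> e0 es; rewrite -{3}(mulr1 (eps e0)) -sum1 mulr_sumr (bigD1_seq e0) //=.
  by rewrite big1_seq ?addr0 // => e' /andP [ne es']; apply: orth.
have [/hasP [e es ne0]|/hasPn all0] := boolP (has (fun e => eps e != 0) s); last first.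
  exfalso; move: sum1; rewrite big1_seq; first by move/eqP; rewrite eq_sym oner_eq0.
  by move=> e /andP [_ es]; move: (all0 e es); rewrite negbK => /eqP.
have e1 : eps e = 1 by case: (cn _ (idem e es)) => // h; rewrite h eqxx in ne0.
exists e, (p e), (q e b); split => //; first exact: Bs.
rewrite {1}eb (bigD1_seq e) //= big1_seq ?addr0 // => e' /andP [ne es'].
have -> : coord B2 b e' = 0.
  change (p e' = 0).
  by rewrite -(mulr1 (p e')) -e1 /eps mulrA (mulrC (p e')) -mulrA (mulrC (p e')) off2; [by rewrite mulr0|exact: Bs|exact: Bs|done].
by rewrite scale0r.
Qed.

Lemma line_same (b e : V) (r r' : R) : r * r' = 1 -> b = r *: e -> same_set (line b) (line e).
Proof.
move=> rr -> w; split => [[a ->]|[a ->]].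
  by exists (a * r); rewrite scalerA.
by exists (a * r'); rewrite scalerA -mulrA (mulrC r') rr mulr1.
Qed.

Lemma same_set_trans (L1 L2 L3 : V -> Prop) : same_set L1 L2 -> same_set L2 L3 -> same_set L1 L3.
Proof. by move=> h1 h2 x; rewrite h1 h2. Qed.

Lemma same_set_sym (L1 L2 : V -> Prop) : same_set L1 L2 -> same_set L2 L1.
Proof. by move=> h x; rewrite h. Qed.

Lemma basis_line_transfer (B1 B2 : V -> Prop) L : zero_sum_free R -> connected_semiring R ->
  is_basis B1 -> is_basis B2 -> basis_line B1 L -> basis_line B2 L.
Proof.
move=> zs cn b1 b2 [b [Bb hL]].
have [e [r [r' [Be rr eb]]]] := key zs cn b1 b2 Bb.
exists e; split => //; apply: same_set_trans hL _; exact: line_same rr eb.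
Qed.

End Key.
Section Aut.
Variables (R : comNzSemiRingType) (V : lSemiModType R).

Lemma aut0 (f : V -> V) : is_automorphism f -> f 0 = 0.
Proof. by move=> [_ hZ _]; have := hZ 0 0; rewrite !scale0r. Qed.

Lemma aut_sum (f : V -> V) (s : seq V) (c : V -> R) : is_automorphism f ->
  f (\sum_(u <- s) c u *: u) = \sum_(u <- s) c u *: f u.
Proof.
move=> af; have := af; move=> [hD hZ _].
elim: s => [|x s IH]; first by rewrite !big_nil aut0.
by rewrite !big_cons hD hZ IH.
Qed.

Lemma aut_inv (f : V -> V) : is_automorphism f ->
  exists g, [/\ is_automorphism g, cancel f g & cancel g f].
Proof.
move=> [hD hZ [g fg gf]]; exists g; split => //; split.
- by move=> x y; apply: (can_inj fg); rewrite hD !gf.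
- by move=> a x; apply: (can_inj fg); rewrite hZ !gf.
- exact: (Bijective gf fg).
Qed.

Lemma image_basis (B : V -> Prop) (f : V -> V) : is_basis B -> is_automorphism f ->
  is_basis (fun w => exists u, B u /\ w = f u).
Proof.
move=> [sp li] af; have [g [ag fg gf]] := aut_inv af.
split.
  move=> v; have [s [c [Bs e]]] := sp (g v).
  exists (map f s), (fun w => c (g w)); split.
    by move=> w /mapP [u us ->]; exists u; split => //; apply: Bs.
  by rewrite big_map -{1}(gf v) e aut_sum //; apply: eq_bigr => u _; rewrite fg.
move=> s c d us Bs e.
have sE : s = map f (map g s) by rewrite -map_comp map_id_in // => x _ /=; rewrite gf.
have ug : uniq (map g s) by rewrite map_inj_uniq //; apply: (can_inj gf).
have Bg : forall u, u \in map g s -> B u.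
  by move=> u /mapP [w ws ->]; have [u' [Bu' ->]] := Bs w ws; rewrite fg.
have e' : \sum_(u <- map g s) c (f u) *: u = \sum_(u <- map g s) d (f u) *: u.
  apply: (can_inj fg); rewrite !aut_sum // -!(big_map f xpredT (fun w => _ w *: w)) -sE.
  exact: e.
move=> u0 u0s; rewrite -(gf u0).
apply: (li _ (fun x => c (f x)) (fun x => d (f x)) ug Bg e').
by apply/mapP; exists u0.
Qed.

Lemma sigma_line (f : V -> V) v : is_automorphism f ->
  same_set (sigma f (line v)) (line (f v)).
Proof.
move=> [_ hZ _] w; split.
  by move=> [u [[r ->] ->]]; exists r; rewrite hZ.
by move=> [r ->]; exists (r *: v); split; [exists r|rewrite hZ].
Qed.

Lemma sigma_same (f : V -> V) L1 L2 : same_set L1 L2 -> same_set (sigma f L1) (sigma f L2).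
Proof. by move=> h w; split => [[u [/h Lu ->]]|[u [/h Lu ->]]]; exists u. Qed.

End Aut.

Theorem lemma3p8 (R : comNzSemiRingType) (V : lSemiModType R) :
  zero_sum_free R -> connected_semiring R -> free_module V ->
  (* basis lines do not depend on the basis *)
  (forall B1 B2 : V -> Prop, is_basis B1 -> is_basis B2 ->
     forall L, basis_line B1 L <-> basis_line B2 L) /\
  (* an automorphism induces a permutation of the basis lines *)
  (forall (B : V -> Prop) (f : V -> V), is_basis B -> is_automorphism f ->
     (forall v, B v -> same_set (sigma f (line v)) (line (f v))) /\
     (forall L, basis_line B L -> basis_line B (sigma f L)) /\
     (forall L1 L2, basis_line B L1 -> basis_line B L2 ->
        same_set (sigma f L1) (sigma f L2) -> same_set L1 L2) /\
     (forall L', basis_line B L' ->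
        exists L, basis_line B L /\ same_set (sigma f L) L')) /\
  (* sigma_{fg} = sigma_f sigma_g *)
  (forall f g : V -> V, is_automorphism f -> is_automorphism g ->
     forall L, same_set (sigma (f \o g) L) (sigma f (sigma g L))).
Proof.
move=> zs cn _.
have img : forall (B : V -> Prop) f L, is_basis B -> is_automorphism f ->
    basis_line B L -> basis_line B (sigma f L).
  move=> B f L bB af [v [Bv hL]].
  have bF := image_basis bB af.
  apply: (basis_line_transfer zs cn bF bB).
  exists (f v); split; first by exists v.
  exact: same_set_trans (sigma_same f hL) (sigma_line v af).
split.
  move=> B1 B2 b1 b2 L; split; exact: basis_line_transfer.
split.
  move=> B f bB af; split; first by move=> v _; exact: sigma_line.
  split; first by move=> L; exact: img.
  split.
    have [g [ag fg gf]] := aut_inv af.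
    move=> L1 L2 _ _ h x; split.
      by move=> Lx; have [u [Lu /(can_inj fg) ->]] := (h (f x)).1 (ex_intro _ x (conj Lx erefl)).
    by move=> Lx; have [u [Lu /(can_inj fg) ->]] := (h (f x)).2 (ex_intro _ x (conj Lx erefl)).
  move=> L' hL'; have [g [ag fg gf]] := aut_inv af.
  exists (sigma g L'); split; first exact: img.
  move=> w; split.
    by move=> [u [[w' [Lw' ->]] ->]]; rewrite gf.
  by move=> Lw; exists (g w); split; [exists w|rewrite gf].
move=> f g _ _ L w; split.
  by move=> [u [Lu ->]]; exists (g u); split => //; exists u.
by move=> [u [[u' [Lu' ->]] ->]]; exists u'.
Qed.
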